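(* Let $\mathbf{X}$ be a Banach space and $\emptyset\ne\mathcal{S}\subset\mathbf{X}$. Assume that either 1. $\mathcal{S}$ is closed, bounded and convex; or 2. $\mathcal{S}=\{\mathbf{x}\in\mathbf{X}:\|\mathbf{x}\|_\ast\le r\}$ for some $r\in(0,\infty)$ and a map $\|\cdot\|_\ast:\mathbf{X}\to[0,\infty]$ such that (a) there is $\kappa\ge1$ with $\|\alpha\mathbf{x}\|_\ast=|\alpha|\|\mathbf{x}\|_\ast$ and $\|\mathbf{x}+\mathbf{y}\|_\ast\le\kappa(\|\mathbf{x}\|_\ast+\|\mathbf{y}\|_\ast)$ for all $\alpha\in\mathbb{R}$, $\mathbf{x},\mathbf{y}\in\mathbf{X}$; (b) there is $C\ge1$ with $\|\mathbf{x}\|_{\mathbf{X}}\le C\|\mathbf{x}\|_\ast$ for all $\mathbf{x}\in\mathbf{X}$; (c) $\mathcal{S}\subset\mathbf{X}$ is closed; (d) $\|\mathbf{x}\|_\ast\to\|\mathbf{x}_0\|_\ast$ whenever $\|\mathbf{x}-\mathbf{x}_0\|_\ast\to0$. Set $s^\ast:=s^\ast_{\mathbf{X}}(\mathcal{S})$. Then for each codec $\mathcal{C}=((E_R,D_R))_{R\in\mathbb{N}}$ there is $\mathbf{x}=\mathbf{x}(\mathcal{C})\in\mathcal{S}$ such that for each $\ell\in\mathbb{N}$, $\|\mathbf{x}-D_R(E_R(\mathbf{x}))\|_{\mathbf{X}}\ge R^{-(s^\ast+\ell^{-1})}$ for infinitely many $R\in\mathbb{N}$.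
   Context: For a real Banach space $\mathbf{X}$ and $\mathcal{S}\subset\mathbf{X}$: a codec is a sequence $((E_R,D_R))_{R\in\mathbb{N}}$ of maps $E_R:\mathcal{S}\to\{0,1\}^R$, $D_R:\{0,1\}^R\to\mathbf{X}$; distortion $\delta_{\mathcal{S},\mathbf{X}}(E_R,D_R)=\sup_{\mathbf{x}\in\mathcal{S}}\|\mathbf{x}-D_R(E_R(\mathbf{x}))\|_{\mathbf{X}}$; optimal compression rate $s^\ast_{\mathbf{X}}(\mathcal{S})=\sup\{s\ge0:\exists\text{ codec with }\sup_RR^s\delta_{\mathcal{S},\mathbf{X}}(E_R,D_R)<\infty\}\in[0,\infty]$. *)

(* Defs.v *)
From HB Require Import structures.
From mathcomp Require Import all_boot all_order all_algebra.
From mathcomp Require Import all_classical all_reals all_analysis.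
Set Implicit Arguments. Unset Strict Implicit. Unset Printing Implicit Defensive.
Import Order.TTheory GRing.Theory Num.Theory numFieldNormedType.Exports.
Local Open Scope classical_set_scope.
Local Open Scope ring_scope.

(* A codec: for each bit budget R, an encoder X -> {0,1}^R and a decoder
   {0,1}^R -> X.  Encoders are total functions on X; only their values on S
   matter. *)
Definition encoders (X : Type) := forall n : nat, X -> n.-tuple bool.
Definition decoders (X : Type) := forall n : nat, n.-tuple bool -> X.

Definition distortion {R : realType} {X : normedModType R} (S : set X)
  (E : encoders X) (D : decoders X) (n : nat) : \bar R :=
  ereal_sup [set (`|x - D n (E n x)|)%:E | x in S].

Definition achievable_rate {R : realType} {X : normedModType R} (S : set X)
  (s : R) : Prop :=
  exists (E : encoders X) (D : decoders X) (M : R),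
    forall n : nat, (0 < n)%N ->
      ((n%:R `^ s)%:E * distortion S E D n <= M%:E)%E.

(* optimal compression rate s^*_X(S) in [0, +oo] (as an extended real;
   sup of the empty set is -oo, which cannot happen for bounded nonempty S) *)
Definition opt_rate {R : realType} {X : normedModType R} (S : set X) : \bar R :=
  ereal_sup [set s%:E | s in [set s : R | 0 <= s /\ achievable_rate S s]].

Definition rate_bound {R : realType} (s : \bar R) (l n : nat) : \bar R :=
  match s with
  | EFin r => (n%:R `^ (- (r + l%:R^-1)))%:E
  | +oo%E => 0%E
  | -oo%E => +oo%E
  end.

(* Main.v *)
Require Import Defs.
From HB Require Import structures.
From mathcomp Require Import all_boot all_order all_algebra.
From mathcomp Require Import all_classical all_reals all_analysis.
From mathcomp Require Import ring lra.
Import Order.TTheory GRing.Theory Num.Theory numFieldNormedType.Exports.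
Local Open Scope classical_set_scope.
Local Open Scope ring_scope.
Local Open Scope convex_scope.


Lemma baire_S (R : realType) (X : completeNormedModType R) (S : set X) (A : nat -> set X) :
  closed S -> S !=set0 ->
  (forall k y e, S y -> 0 < e -> exists z d, [/\ S z, `|y - z| <= e, 0 < d,
      d <= e & forall w, S w -> `|z - w| <= d -> ~ A k w]) ->
  exists x, S x /\ forall k, ~ A k x.
Proof.
move=> cS [y0 Sy0] H.
have H' : forall p : nat * (X * R), exists q : X * R,
   S p.2.1 -> 0 < p.2.2 -> [/\ S q.1, `|p.2.1 - q.1| <= p.2.2, 0 < q.2,
      q.2 <= p.2.2 & forall w, S w -> `|q.1 - w| <= q.2 -> ~ A p.1 w].
  move=> [k [y e]] /=.
  case: (pselect (S y /\ 0 < e)) => [[Sy e0]|nh]; last first.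
    by exists (0,0) => Sy e0; exfalso; apply: nh.
  have [z [d [? ? ? ? ?]]] := H k y e Sy e0.
  by exists (z, d).
have [f Pf] := choice H'.
pose fix ar n := if n is p.+1 then
   f (p.+1, ((ar p).1, Num.min ((ar p).2 / 2) (p.+2%:R^-1))) else f (0%N, (y0, 1)).
pose a n := (ar n).1. pose r n := (ar n).2.
have inv n : S (a n) /\ 0 < r n.
  elim: n => [|n [Sa r0]].
    by case: (Pf (0%N,(y0,1)) Sy0 ltr01).
  have m0 : 0 < Num.min (r n / 2) (n.+2%:R^-1).
    by rewrite lt_min divr_gt0 //= invr_gt0 ltr0n.
  by case: (Pf (n.+1, (a n, Num.min (r n / 2) (n.+2%:R^-1))) Sa m0).
have step n : [/\ `|a n - a n.+1| <= r n / 2, r n.+1 <= r n / 2,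
    r n.+1 <= n.+2%:R^-1 &
    forall w, S w -> `|a n.+1 - w| <= r n.+1 -> ~ A n.+1 w].
  have [Sa r0] := inv n.
  have m0 : 0 < Num.min (r n / 2) (n.+2%:R^-1).
    by rewrite lt_min divr_gt0 //= invr_gt0 ltr0n.
  move: (Pf (n.+1, (a n, Num.min (r n / 2) (n.+2%:R^-1))) Sa m0) => /= -[] .
  rewrite !le_min => _ /andP[h1 _] _ /andP[h2 h3] h4.
  by split.
have notA n w : S w -> `|a n - w| <= r n -> ~ A n w.
  case: n => [|n]; last by case: (step n) => _ _ _; apply.
  by case: (Pf (0%N,(y0,1)) Sy0 ltr01) => _ _ _ _; apply.
have rle n : r n <= n.+1%:R^-1.
  case: n => [|n]; last by case: (step n).
  by case: (Pf (0%N,(y0,1)) Sy0 ltr01) => _ _ _ /=; rewrite invr1.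
have nest n m w : (n <= m)%N -> `|a m - w| <= r m -> `|a n - w| <= r n.
  elim: m => [|m IH]; first by rewrite leqn0 => /eqP ->.
  rewrite leq_eqVlt => /orP[/eqP -> //|]; rewrite ltnS => nm h.
  apply: IH => //.
  case: (step m) => h1 h2 _ _.
  rewrite -(subrK (a m.+1) (a m)) -addrA.
  apply: (le_trans (ler_normD _ _)).
  by rewrite [r m]splitr lerD // (le_trans h (le_trans h2 _)).
have : cvg (a @ \oo).
  suff : cauchy (a @ \oo) by exact: cauchy_cvg.
  suff : cauchy_ex (a @ \oo) by exact: cauchy_exP.
  move=> e e0; rewrite /fmapE -ball_normE /ball_.
  have [N Ne] : exists N, N.+1%:R^-1 < e.
    exists (Num.trunc e^-1).
    by rewrite -ltf_pV2 ?(posrE,divr_gt0)// invrK truncnS_gt.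
  exists (a N), N => // m /= Nm.
  apply: (le_lt_trans _ Ne); apply: (le_trans _ (rle N)).
  by apply: (nest N m (a m) Nm); rewrite subrr normr0; case: (inv m) => _ /ltW.
rewrite cvg_ex //= => -[l Hl]; exists l; split.
  apply: (closed_cvg _ cS _ _ Hl).
  by apply: nearW => m; case: (inv m).
move=> k; apply: notA.
  apply: (closed_cvg _ cS _ _ Hl).
  by apply: nearW => m; case: (inv m).
have : closed_ball (a k) (r k) l.
  apply: (closed_cvg _ (@closed_ball_closed _ _ (a k) (r k)) _ _ Hl).
  exists k => // m /= km.
  rewrite closed_ballE; last by case: (inv k).
  rewrite /closed_ball_ /=.
  by apply: (nest k m (a m) km); rewrite subrr normr0; case: (inv m) => _ /ltW.
by rewrite closed_ballE; last by case: (inv k).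
Qed.


Lemma codec_rate (R : realType) (X : normedModType R) (S : set X) (E : encoders X)
  (D : decoders X) (B s t : R) (k : nat) (a : X) :
  0 < t -> 0 <= B -> 0 <= s -> (forall x, S x -> `|x| <= B) ->
  (forall n x, (0 < n)%N -> S x -> exists w,
     `|a + t *: x - w| < t * n%:R `^ (-(s + k.+1%:R^-1)) /\
     (forall m, (k < m)%N -> `|w - D m (E m w)| < m%:R `^ (-(s + k.+1%:R^-1)))) ->
  achievable_rate S (s + k.+1%:R^-1).
Proof.
move=> t0 B0 s0 SB H.
set sig := s + k.+1%:R^-1.
have sig0 : 0 <= sig by rewrite addr_ge0 // invr_ge0 ler0n.
have H' : forall p : nat * X, exists w, (0 < p.1)%N -> S p.2 ->
     `|a + t *: p.2 - w| < t * p.1%:R `^ (- sig) /\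
     (forall m, (k < m)%N -> `|w - D m (E m w)| < m%:R `^ (- sig)).
  move=> [n x] /=.
  case: (pselect ((0 < n)%N /\ S x)) => [[n0 Sx]|nh]; last first.
    by exists 0 => n0 Sx; exfalso; apply: nh.
  have [w hw] := H n x n0 Sx.
  by exists w.
have [g Pg] := choice H'.
pose E' : encoders X := fun n x => E n (g (n, x)).
pose D' : decoders X := fun n b => if (k < n)%N then t^-1 *: (D n b - a) else 0.
exists E', D', (k%:R `^ sig * B + (1 + t^-1)) => n n0.
pose bd := if (k < n)%N then (1 + t^-1) * n%:R `^ (- sig) else B.
have hd : (distortion S E' D' n <= bd%:E)%E.
  apply: ge_ereal_sup => _ [x Sx <-]; rewrite lee_fin /D' /E' /bd.
  case: ifP => kn; last by rewrite subr0 SB.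
  have [h1 h2] := Pg (n, x) n0 Sx.
  move: h1 h2 => /=; set w := g (n, x) => h1 h2.
  have -> : x - t^-1 *: (D n (E n w) - a) =
     t^-1 *: ((a + t *: x - w) + (w - D n (E n w))).
    rewrite !scalerDr !scalerN scalerA mulVf ?gt_eqF // scale1r.
    by rewrite [RHS]addrA subrK opprB addrA [x + _]addrC.
  rewrite normrZ gtr0_norm ?invr_gt0 //.
  have hu : `|a + t *: x - w| + `|w - D n (E n w)| <= t * n%:R `^ (- sig) + n%:R `^ (- sig).
    by apply: ltW; apply: ltrD => //; exact: h2.
  have ti : 0 <= t^-1 by rewrite invr_ge0 ltW.
  apply: (le_trans (ler_wpM2l ti (ler_normD _ _))).
  apply: (le_trans (ler_wpM2l ti hu)).
  by rewrite mulrDr mulrA mulVf ?gt_eqF // mul1r mulrDl mul1r.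
apply: (le_trans (lee_wpmul2l _ hd)); first by rewrite lee_fin powR_ge0.
rewrite -EFinM lee_fin /bd.
have np : 0 < n%:R `^ sig :> R by rewrite powR_gt0 // ltr0n.
case: ifP => kn.
  rewrite mulrCA powRN mulfV ?gt_eqF // mulr1 lerDr.
  by rewrite mulr_ge0 // powR_ge0.
rewrite -[X in X <= _]addr0 lerD //; last by rewrite addr_ge0 // invr_ge0 ltW.
rewrite ler_wpM2r //.
apply: ge0_ler_powR => //; rewrite ?nnegrE ?ler0n // ler_nat.
by rewrite leqNgt kn.
Qed.


Lemma geo2 (R : realType) (X : normedModType R) (nstar : X -> \bar R) (r B : R) (S : set X) :
  0 < r -> 0 <= B -> (forall x, (0 <= nstar x)%E) ->
  S = [set x | (nstar x <= r%:E)%E] ->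
  (forall (a : R) x, nstar (a *: x)%R = (`|a|%:E * nstar x)%E) ->
  (forall x, S x -> `|x| <= B) ->
  (forall (u : nat -> X) (x0 : X),
            (fun n => nstar (u n - x0)%R) @ \oo --> 0%E ->
            (fun n => nstar (u n)) @ \oo --> nstar x0) ->
  forall y e, S y -> 0 < e -> exists a t, 0 < t /\
     forall x, S x -> S (a + t *: x) /\ `|y - (a + t *: x)| < e.
Proof.
move=> r0 B0 nn SE hZ SB hd y e Sy e0.
have Sy' : (nstar y <= r%:E)%E by rewrite SE in Sy.
pose c := e / (2 * (B + e)).
have Be0 : 0 < B + e by rewrite ltr_wpDl.
have c0 : 0 < c by rewrite divr_gt0 // mulr_gt0.
have cBe : c * B + c * e = e / 2.
  by rewrite -mulrDr /c; field; rewrite gt_eqF.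
have c1 : c < 1.
  have cB0 : 0 <= c * B by rewrite mulr_ge0 // ltW.
  have : c * e < 1 * e by lra.
  by rewrite ltr_pM2r.
pose lam := 1 - c.
have lam0 : 0 <= lam by rewrite subr_ge0 ltW.
pose a := lam *: y.
have na : (nstar a <= (lam * r)%:E)%E.
  rewrite /a hZ ger0_norm // EFinM.
  by apply: lee_wpmul2l => //; rewrite lee_fin.
have lr : lam * r < r by rewrite -[X in _ < X]mul1r ltr_pM2r // /lam; lra.
have ya : `|y - a| < e / 2.
  have -> : y - a = c *: y by rewrite /a /lam scalerBl scale1r opprB addrC subrK.
  rewrite normrZ gtr0_norm //.
  have := ler_wpM2l (ltW c0) (SB y Sy).
  have : 0 < c * e by rewrite mulr_gt0.
  lra.
pose tau := e / (2 * (B + 1)).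
have tau0 : 0 < tau by rewrite divr_gt0 // mulr_gt0 // ltr_wpDl.
have tauB : tau * B + tau = e / 2.
  by rewrite -[X in _ + X]mulr1 -mulrDr /tau; field; rewrite gt_eqF // ltr_wpDl.
have [t [t0 [tt ht]]] : exists t, 0 < t /\ t <= tau /\
    forall x, S x -> (nstar (a + t *: x)%R <= r%:E)%E.
  apply: contrapT => hne.
  have hx : forall m : nat, exists x, S x /\
      (r%:E < nstar (a + (tau / m.+1%:R) *: x)%R)%E.
    move=> m; apply: contrapT => hm; apply: hne.
    exists (tau / m.+1%:R); split; first by rewrite divr_gt0.
    split; first by rewrite ler_pdivrMr ?ltr0n // ler_peMr // ?(ltW tau0) // ler1n.
    move=> x Sx; rewrite leNgt; apply/negP => hlt; apply: hm; by exists x.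
  have [xs hxs] := choice hx.
  pose u m := a + (tau / m.+1%:R) *: xs m.
  have h1 : (fun m => nstar (u m - a)%R) @ \oo --> 0%E.
    apply: (@squeeze_cvge _ _ _ _ (fun=> 0%E) _ (fun m => ((tau * r) * m.+1%:R^-1)%:E)).
    - apply: nearW => m /=; rewrite nn /=.
      have tm0 : 0 < tau / m.+1%:R by apply: divr_gt0 => //; rewrite ltr0n.
      rewrite /u addrC addKr hZ gtr0_norm //.
      rewrite (mulrAC tau r) [X in (_ <= X)%E]EFinM.
      have := hxs m => -[+ _]; rewrite SE /= => h.
      by apply: (lee_wpmul2l _ h); rewrite lee_fin ltW.
    - exact: cvg_cst.
    - apply: cvg_EFin; first by apply: nearW.
      have := cvgMl_tmp (a := tau * r) (@cvg_harmonic R); rewrite mulr0.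
      exact.
  have h2 := hd u a h1.
  have fa : nstar a = (fine (nstar a))%:E.
    by rewrite fineK // ge0_fin_numE // (le_lt_trans na) ?ltry.
  rewrite fa in h2; move/fine_cvgP: h2 => [hfin hcv].
  have qr : fine (nstar a) < r.
    by apply: le_lt_trans lr; rewrite -lee_fin -fa.
  have ev := cvgr_lt _ hcv _ qr.
  have : \forall m \near \oo, False.
    near=> m.
    have F1 : fine (nstar (u m)) < r by near: m; exact: ev.
    have F2 : nstar (u m) \is a fin_num by near: m; exact: hfin.
    have [_ F3] := hxs m.
    move: F3; rewrite -(fineK F2) lte_fin => F3.
    by move: (lt_trans F1 F3); rewrite ltxx.
  by case => N _ /(_ N (leqnn N)).
exists a, t; split => // x Sx; split.
  by rewrite SE; apply: ht.
rewrite opprD addrA.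
apply: (le_lt_trans (ler_normB _ _)).
rewrite normrZ gtr0_norm //.
have := ler_wpM2l (ltW t0) (SB x Sx).
have := ler_wpM2r B0 tt.
lra.
Unshelve. all: by end_near.
Qed.


Lemma geo1 (R : realType) (X : normedModType R) (S : set X) (B : R) :
  0 <= B -> convex_set (S : set (convex_lmodType X)) ->
  (forall x, S x -> `|x| <= B) ->
  forall y e, S y -> 0 < e -> exists a t, 0 < t /\
     forall x, S x -> S (a + t *: x) /\ `|y - (a + t *: x)| < e.
Proof.
move=> B0 cS SB y e Sy e0.
pose t := e / (2 * B + e).
have d0 : 0 < 2 * B + e by rewrite ltr_wpDl // mulr_ge0.
have t0 : 0 < t by rewrite divr_gt0.
have te : t * (2 * B) + t * e = e by rewrite -mulrDr /t; field; rewrite gt_eqF.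
have t1 : t <= 1.
  have : t * e <= 1 * e by have := mulr_ge0 (ltW t0) (mulr_ge0 (ler0n _ 2) B0); lra.
  by rewrite ler_pM2r.
have tP : Itv.spec (@Itv.num_sem R) (Itv.Real `[0%Z, 1%Z]) t.
  by rewrite /= /Itv.num_sem /= in_itv /= ltW // t1 andbT num_real.
pose i : {i01 R} := Itv.mk tP.
exists ((1 - t) *: y), t; split => // x Sx; split.
  have := cS x y i; rewrite !inE => /(_ Sx Sy).
  have -> : (x : convex_lmodType X) <| i |> y = (1 - t) *: y + t *: x.
    by rewrite addrC.
  by [].
have -> : y - ((1 - t) *: y + t *: x) = t *: (y - x).
  rewrite scalerBl scale1r scalerBr opprD opprB.
  by rewrite addrA [y + _]addrC subrK.
rewrite normrZ gtr0_norm //.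
have h : `|y - x| <= 2 * B.
  by apply: (le_trans (ler_normB _ _)); have := SB x Sx; have := SB y Sy; lra.
have := ler_wpM2l (ltW t0) h.
have := mulr_gt0 t0 e0.
lra.
Qed.

Module FB.
Import finmap.
Lemma fin_bound (A : set nat) : finite_set A -> exists N, forall n, A n -> (n < N)%N.
Proof.
move=> /finite_fsetP[X ->]; exists (\max_(i <- X) i).+1 => n /= nX; rewrite ltnS.
exact: (@leq_bigmax_seq _ _ xpredT id n nX).
Qed.
End FB.
Import FB.

Lemma zero_rate (R : realType) (X : normedModType R) (S : set X) (B : R) :
  (forall x, S x -> `|x| <= B) -> achievable_rate S 0.
Proof.
move=> SB; exists (fun n _ => nseq_tuple n false), (fun n _ => 0), B => n n0.
rewrite powRr0 mul1e; apply: ge_ereal_sup => _ [x Sx <-].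
by rewrite lee_fin subr0; exact: SB.
Qed.

Theorem propositionG1 (R : realType) (X : completeNormedModType R) (S : set X) :
  S !=set0 ->
  ( (closed S /\ bounded_set S /\ convex_set (S : set (convex_lmodType X)))
    \/
    (exists (nstar : X -> \bar R) (r kappa C : R),
        0 < r /\ 1 <= kappa /\ 1 <= C /\
        (forall x, (0 <= nstar x)%E) /\
        S = [set x | (nstar x <= r%:E)%E] /\
        (forall (a : R) x, nstar (a *: x)%R = (`|a|%:E * nstar x)%E) /\
        (forall x y, (nstar (x + y)%R <= kappa%:E * (nstar x + nstar y))%E) /\
        (forall x, ((`|x|)%:E <= C%:E * nstar x)%E) /\
        closed S /\
        (forall (u : nat -> X) (x0 : X),
            (fun n => nstar (u n - x0)%R) @ \oo --> 0%E ->
            (fun n => nstar (u n)) @ \oo --> nstar x0)) ) ->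
  forall (E : encoders X) (D : decoders X),
    exists x, S x /\
      forall l : nat, (0 < l)%N ->
        infinite_set [set n : nat |
          (rate_bound (opt_rate S) l n <= (`|x - D n (E n x)|)%:E)%E].
Proof.
move=> S0 hyp E D.
have [B [B0 SB]] : exists B, 0 <= B /\ forall x, S x -> `|x| <= B.
  case: hyp => [[_ [bS _]]|[nstar [r [kappa [C [r0 [k1 [C1 [nn [SE [_ [_ [hC _]]]]]]]]]]]]].
    case: bS => M [_ HM]; exists (`|M| + 1); split; first by rewrite addr_ge0.
    move=> x Sx; apply: (HM (`|M| + 1)) => //.
    by rewrite (le_lt_trans (ler_norm M)) // ltrDl.
  exists (C * r); split; first by rewrite mulr_ge0 // ltW // (lt_le_trans ltr01 C1).
  move=> x; rewrite SE /= => hx; rewrite -lee_fin EFinM.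
  apply: (le_trans (hC x)); apply: (lee_wpmul2l _ hx).
  by rewrite lee_fin (le_trans ler01 C1).
have cS : closed S.
  by case: hyp => [[]|[? [? [? [? [_ [_ [_ [_ [_ [_ [_ [_ [cS _]]]]]]]]]]]]]].
have G : forall y e, S y -> 0 < e -> exists a t, 0 < t /\
     forall x, S x -> S (a + t *: x) /\ `|y - (a + t *: x)| < e.
  case: hyp => [[_ [_ cvS]]|[nstar [r [kappa [C [r0 [_ [_ [nn [SE [hZ [_ [_ [_ hd]]]]]]]]]]]]]].
    exact: (@geo1 _ _ S B B0 cvS SB).
  exact: (@geo2 _ _ nstar r B S r0 B0 nn SE hZ SB hd).
have opt0 : (0%:E <= opt_rate S)%E.
  apply: ereal_sup_ubound; exists 0 => //; split => //; exact: (@zero_rate _ _ S B SB).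
case Hs: (opt_rate S) => [s| |]; last by move: opt0; rewrite Hs.
- have s0 : 0 <= s by rewrite -lee_fin -Hs.
  pose A k w := forall n, (k < n)%N ->
     `|w - D n (E n w)| < n%:R `^ (-(s + k.+1%:R^-1)).
  have [x [Sx nA]] : exists x, S x /\ forall k, ~ A k x.
    apply: (@baire_S _ _ S A cS S0) => k y e Sy e0.
    apply: contrapT => hne.
    have [a [t [t0 ht]]] := G y e Sy e0.
    have ach : achievable_rate S (s + k.+1%:R^-1).
      apply: (@codec_rate _ _ S E D B s t k a t0 B0 s0 SB).
      move=> n x n0 Sx.
      have [Sz zy] := ht x Sx.
      set z := a + t *: x.
      set p := t * n%:R `^ (-(s + k.+1%:R^-1)).
      have p0 : 0 < p by rewrite mulr_gt0 // powR_gt0 // ltr0n.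
      apply: contrapT => hw; apply: hne.
      exists z, (Num.min e (p / 2)); split => //.
      + by rewrite ltW.
      + by rewrite lt_min e0 divr_gt0.
      + by rewrite ge_min lexx.
      + move=> w Sw zw Aw; apply: hw; exists w; split => //.
        have : Num.min e (p / 2) <= p / 2 by rewrite ge_min lexx orbT.
        move: zw; lra.
    have : ((s + k.+1%:R^-1)%:E <= opt_rate S)%E.
      apply: ereal_sup_ubound; exists (s + k.+1%:R^-1) => //; split => //.
      by rewrite addr_ge0 // invr_ge0 ler0n.
    rewrite Hs lee_fin => h.
    have : 0 < k.+1%:R^-1 :> R by rewrite invr_gt0 ltr0n.
    set q := k.+1%:R^-1 in h *; lra.
  exists x; split => // l l0 fin.
  have [N HN] := @fin_bound _ fin.
  apply: (nA (maxn l N)) => n kn.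
  have nN : (N <= n)%N by apply: leq_trans (leq_maxr l N) (ltnW kn).
  have ln : (l <= (maxn l N).+1)%N by apply: leqW; exact: leq_maxl.
  have nb : ~ ((n%:R `^ (-(s + l%:R^-1)))%:E <= (`|x - D n (E n x)|)%:E)%E.
    by move/HN; rewrite ltnNge nN.
  move/negP: nb; rewrite lee_fin -ltNge => nb.
  apply: (lt_le_trans nb); apply: ler_powR.
    by rewrite ler1n; apply: leq_ltn_trans kn.
  rewrite lerN2 lerD2l lef_pV2 ?posrE ?ltr0n // ?ler_nat //.
- have [y0 Sy0] := S0.
  exists y0; split => // l _ /=.
  apply: (sub_infinite_set _ infinite_nat) => n _ /=.
  by rewrite lee_fin normr_ge0.
Qed.
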